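(* Let $i\ge 2$ and let $c_0,\dots,c_{i-1}$ be the vertices of a cycle (in this cyclic order), each with a positive weight $w(c_j)$, and let $W=\sum_j w(c_j)$. Run the following procedure (BalanceInCycle): initialize $b_{OPT}\gets 0$, a queue $Q_1$ empty and a queue $Q_2$ containing $c_0,c_1,\dots,c_{i-1}$ in this order (head $c_0$). Repeat the following iteration until $c_0$ becomes the head of $Q_1$ for the second time: update $b_{OPT}\gets\max\{b_{OPT},\min(w(Q_1),w(Q_2))\}$; then, if $w(Q_1)>w(Q_2)$, dequeue the head of $Q_1$ and append it to the tail of $Q_2$, otherwise dequeue the head of $Q_2$ and append it to the tail of $Q_1$. Then the procedure finds the most balanced cut of the cycle, i.e. at termination $b_{OPT}$ equals $\max_J \min\{w(J),W-w(J)\}$, where $J$ ranges over all non-empty proper subsets of $\{c_0,\dots,c_{i-1}\}$ that are contiguous in the cyclic order (equivalently, over all cuts of the cycle consisting of two distinct cycle edges) and $w(J)=\sum_{c\in J}w(c)$.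
   Context: $w(Q)$ denotes the sum of the weights of the elements currently in queue $Q$. Queues are FIFO. In the paper's application, the cycle is a cycle of the cactus representation of all minimum cuts of a graph $G$ with $n$ vertices (so $W=n$), $w(c_j)$ is the number of vertices of $G$ represented in the sub-cactus hanging off $c_j$, each pair of cycle edges gives a minimum cut of $G$, and the balance of a cut is the number of vertices of $G$ on its lighter side. *)

(* Defs.v *)
From mathcomp Require Import all_boot all_order all_algebra.
Set Implicit Arguments. Unset Strict Implicit. Unset Printing Implicit Defensive.
Import Order.TTheory GRing.Theory Num.Theory.
Local Open Scope ring_scope.

(* Cycle vertices c_0,...,c_{i-1} are represented by the naturals 0,...,i-1;
   the weight function is w : nat -> R (only its values on 0..i-1 matter). *)

Section Balance.
Variable R : realDomainType.
Variable w : nat -> R.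

Definition qweight (q : seq nat) : R := \sum_(x <- q) w x.

(* State of BalanceInCycle: Q1, Q2 (heads at the front of the lists),
   b_OPT, and the number of times c_0 has become the head of Q1. *)
Record bstate := BState { Q1 : seq nat; Q2 : seq nat; bopt : R; cnt0 : nat }.

Definition init_state (i : nat) : bstate := BState [::] (iota 0 i) 0 0.

Definition bstep (s : bstate) : bstate :=
  let q1 := Q1 s in let q2 := Q2 s in
  let b' := Num.max (bopt s) (Num.min (qweight q1) (qweight q2)) in
  let '(q1', q2') :=
    if qweight q1 > qweight q2 then (behead q1, rcons q2 (head 0%N q1))
    else (rcons q1 (head 0%N q2), behead q2) in
  let became := (ohead q1' == Some 0%N) && (ohead q1 != Some 0%N) in
  BState q1' q2' b' (cnt0 s + became).

(* Run the loop with the given fuel: the termination test (c_0 has become the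
   head of Q1 for the second time) is performed before each iteration. *)
Fixpoint brun (fuel : nat) (s : bstate) : option R :=
  match fuel with
  | 0 => None
  | f.+1 => if (2 <= cnt0 s)%N then Some (bopt s) else brun f (bstep s)
  end.

Definition BalanceInCycle (i fuel : nat) : option R := brun fuel (init_state i).

Definition arc_weight (i a l : nat) : R := \sum_(k < l) w ((a + k) %% i).

Definition total_weight (i : nat) : R := \sum_(j < i) w j.

Definition arc_balance (i a l : nat) : R :=
  Num.min (arc_weight i a l) (total_weight i - arc_weight i a l).

End Balance.

(* Main.v *)
Require Import Defs.
From mathcomp Require Import all_boot all_order all_algebra.
From mathcomp Require Import zify ring lra.
Set Implicit Arguments. Unset Strict Implicit. Unset Printing Implicit Defensive.
Import Order.TTheory GRing.Theory Num.Theory.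
Local Open Scope ring_scope.

Section Proof.
Variable R : realDomainType.
Variable i : nat.
Variable w : nat -> R.
Hypothesis hi : (2 <= i)%N.
Hypothesis hw : forall j, (j < i)%N -> 0 < w j.

Definition B s n := \sum_(k < n) w ((s + k) %% i).
Definition W := total_weight w i.

Lemma ipos : (0 < i)%N. Proof. by apply: leq_trans hi. Qed.

Lemma wpos k : 0 < w (k %% i). Proof. apply: hw; exact: ltn_pmod ipos. Qed.

Lemma B0 s : B s 0 = 0. Proof. by rewrite /B big_ord0. Qed.

Lemma B_ge0 s n : 0 <= B s n.
Proof. rewrite /B; apply: sumr_ge0 => k _; exact: ltW (wpos _). Qed.

Lemma BD s n m : B s (n + m) = B s n + B (s + n) m.
Proof.
rewrite /B big_split_ord /=; congr (_ + _); apply: eq_bigr => k _ /=.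
by rewrite addnA.
Qed.

Lemma BS s n : B s n.+1 = w (s %% i) + B s.+1 n.
Proof.
rewrite /B big_ord_recl /= addn0; congr (_ + _); apply: eq_bigr => k _.
by rewrite /bump leq0n add1n addnS addSn.
Qed.

Lemma B1 s : B s 1 = w (s %% i).
Proof. by rewrite BS B0 addr0. Qed.

Lemma B_pos s n : (0 < n)%N -> 0 < B s n.
Proof.
case: n => // n _; rewrite BS; apply: ltr_wpDr; [exact: B_ge0 | exact: wpos].
Qed.

Lemma B_mod s y n : B (s %% i + y) n = B (s + y) n.
Proof. by apply: eq_bigr => k _; rewrite -!addnA modnDml. Qed.

Lemma B_per s n : B (s + i) n = B s n.
Proof. by apply: eq_bigr => k _; rewrite addnAC modnDr. Qed.

Lemma BW s : B s i = W.
Proof.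
elim: s => [|s IH].
  by apply: eq_bigr => k _; rewrite add0n modn_small.
have h1 := BD s 1 i; have h2 := BD s i 1.
rewrite addnC in h2; rewrite h2 !B1 addnC modnDl addn1 in h1.
rewrite -IH; apply: (addrI (w (s %% i))); rewrite -h1; exact: addrC.
Qed.

Lemma B_sub s n a l : (s <= a)%N -> (a + l <= s + n)%N -> B a l <= B s n.
Proof.
move=> h1 h2.
have -> : n = ((a - s) + (l + (s + n - (a + l))))%N by lia.
rewrite BD BD subnKC //.
have := B_ge0 s (a - s); have := B_ge0 (a + l) (s + n - (a + l)); lra.
Qed.

Lemma BWsplit s n : (n <= i)%N -> W - B s n = B (s + n) (i - n).
Proof. move=> h; rewrite -(BW s) -{1}(subnKC h) BD; ring. Qed.

Local Notation mi := (map (modn^~ i)).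

Lemma qw_iota s n : qweight w (mi (iota s n)) = B s n.
Proof.
elim: n s => [|n IH] s; first by rewrite /qweight big_nil B0.
by rewrite /qweight /= big_cons BS -IH.
Qed.

Definition cnt s n : nat :=
  if (s == 0%N) && (n == 0%N) then 0 else if (s == i) && (0 < n)%N then 2 else 1.

Definition Inv (st : bstate R) s n :=
  [/\ Q1 st = mi (iota s n), Q2 st = mi (iota (s + n) (i - n)),
      (s <= i)%N, (n <= i)%N & cnt0 st = cnt s n].

Lemma ohead_mi s n :
  (ohead (mi (iota s n)) == Some 0%N) = (0 < n)%N && ((s %% i)%N == 0%N).
Proof. by case: n. Qed.

Lemma mod0i s : (s <= i)%N -> ((s %% i)%N == 0%N) = (s == 0%N) || (s == i).
Proof.
move=> h; case: (ltngtP s i) h => // [hl|->] _; last by rewrite modnn eqxx orbT.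
by rewrite modn_small // orbF.
Qed.

Lemma step_s st s n : Inv st s n -> (cnt s n < 2)%N ->
  B (s + n) (i - n) < B s n ->
  Inv (bstep w st) s.+1 n.-1 /\
  bopt (bstep w st) = Num.max (bopt st) (Num.min (B s n) (B (s + n) (i - n))).
Proof.
case: st => q1 q2 b c [/= -> -> hs hn ->] hc hlt.
have n0 : (0 < n)%N.
  case: n hn hc hlt => // _ _; rewrite B0 => h.
  by have := B_ge0 (s + 0) (i - 0); rewrite leNgt h.
rewrite /bstep /= !qw_iota hlt; split => //.
case: n n0 hn hc hlt => // n _ hn hc hlt /=.
have hsi : (s < i)%N.
  move: hc; rewrite /cnt andbF /= andbT; case: (s =P i) => [->|]; [by [] | lia].
split => //.
- rewrite /= addSnnS; have -> : (i - n = (i - n.+1) + 1)%N by lia.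
  rewrite iotaD map_cat cats1 /=; congr rcons.
  have -> : (s + n.+1 + (i - n.+1) = s + i)%N by lia.
  by rewrite modnDr.
- by apply: ltnW.
- rewrite /= ohead_mi mod0i // /cnt /= modn_small // (ltn_eqF hsi) andbF /=.
  case: (s.+1 =P i) => [hE|_]; rewrite /= ?andbF ?andbT ?addn0 //.
  case: n {hn hc hlt} => // n; case: s hE {hs hsi} => [|s] hE //; lia.
Qed.


Lemma step_e st s n : Inv st s n -> (cnt s n < 2)%N ->
  B s n <= B (s + n) (i - n) ->
  Inv (bstep w st) s n.+1 /\
  bopt (bstep w st) = Num.max (bopt st) (Num.min (B s n) (B (s + n) (i - n))).
Proof.
case: st => q1 q2 b c [/= -> -> hs hn ->] hc hle.
have ni : (n < i)%N.
  rewrite ltn_neqAle hn andbT; apply/eqP => en; move: hle.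
  rewrite en subnn B0 BW leNgt => /negP; apply.
  rewrite -(BW 0); exact: B_pos ipos.
have e1 : rcons (mi (iota s n)) (head 0%N (mi (iota (s + n) (i - n)))) = mi (iota s n.+1).
  have -> : (i - n = (i - n.+1).+1)%N by lia.
  have -> : iota s n.+1 = iota s n ++ [:: s + n]%N by rewrite -addn1 iotaD.
  by rewrite map_cat cats1.
have e2 : behead (mi (iota (s + n) (i - n))) = mi (iota (s + n.+1) (i - n.+1)).
  have -> : (i - n = (i - n.+1).+1)%N by lia.
  by rewrite /= addnS.
rewrite /bstep /= !qw_iota ltNge hle /= e1 e2; split => //; split => //.
rewrite /= !ohead_mi mod0i // /cnt.
move: hc; rewrite /cnt.
case: n {hn ni hle e1 e2} => [|n]; case: (s =P 0) => [->|h0]; case: (s =P i) => [hI|hI] /=; rewrite ?andbT ?andbF /=; try lia.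
all: have h0i : (0 == i) = false by apply/negbTE; rewrite eq_sym -lt0n ipos.
all: rewrite ?h0i ?hI ?mod0n ?modnn ?modn_small //; try lia.
all: by case: s h0 {hs hI}.
Qed.

Definition P2 (b : R) := b = 0 \/
  exists a l, [/\ (a < i)%N, (0 < l)%N, (l < i)%N & b = arc_balance w i a l].

Definition P3 s n (b : R) := forall a l, (a < i)%N -> (0 < l)%N -> (l < i)%N ->
  B a l <= B (a + l) (i - l) -> ~~ ((s <= a)%N && (s + n <= a + l)%N) -> B a l <= b.

Definition Light (b : R) := forall a l, (a < i)%N -> (0 < l)%N -> (l < i)%N ->
  B a l <= B (a + l) (i - l) -> B a l <= b.

Lemma P2_step b s n : (n <= i)%N -> 0 <= b -> P2 b ->
  P2 (Num.max b (Num.min (B s n) (B (s + n) (i - n)))).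
Proof.
move=> hn b0 hb.
set m := Num.min _ _.
have [hmb|hbm] := leP m b =>//.
idtac.
right.
have n0 : (0 < n)%N.
  rewrite lt0n; apply/eqP => en; move: hbm; rewrite /m en B0 => h.
  have : Num.min 0 (B (s + 0) (i - 0)) <= 0 by rewrite ge_min lexx.
  by rewrite leNgt (le_lt_trans b0 h).
have ni : (n < i)%N.
  rewrite ltn_neqAle hn andbT; apply/eqP => en; move: hbm; rewrite /m en subnn B0.
  have : Num.min (B s i) 0 <= 0 by rewrite ge_min lexx orbT.
  by move=> h1 h2; move: h1; rewrite leNgt (le_lt_trans b0 h2).
exists (s %% i)%N, n; split => //; first exact: ltn_pmod ipos.
rewrite /arc_balance /m; congr Num.min.
  by rewrite /arc_weight -(addn0 (s %% i)%N) -/(B _ _) B_mod addn0.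
rewrite -/W -BWsplit; last exact: ltnW.
by rewrite /arc_weight -(addn0 (s %% i)%N) -/(B _ _) B_mod addn0.
Qed.


Lemma P3_s s n b : (0 < n)%N -> (n <= i)%N -> B (s + n) (i - n) < B s n -> P3 s n b ->
  P3 s.+1 n.-1 (Num.max b (Num.min (B s n) (B (s + n) (i - n)))).
Proof.
move=> n0 hn hlt h3 a l ha hl0 hli hlight hnp.
have hb : b <= Num.max b (Num.min (B s n) (B (s + n) (i - n))) by rewrite le_max lexx.
apply: le_trans hb; apply: h3 => //; apply/negP => /andP [h1 h2].
have eas : a = s.
  apply/eqP; rewrite eqn_leq h1 andbT; apply: contraNT hnp; rewrite -ltnNge => h.
  by apply/andP; split => //; lia.
subst a.
have h4 : B s n <= B s l by apply: B_sub => //; lia.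
have h5 : B (s + l) (i - l) <= B (s + n) (i - n) by apply: B_sub => //; lia.
lra.
Qed.

Lemma P3_e s n b : B s n <= B (s + n) (i - n) -> P3 s n b ->
  P3 s n.+1 (Num.max b (Num.min (B s n) (B (s + n) (i - n)))).
Proof.
move=> hle h3 a l ha hl0 hli hlight hnp.
case hp : ((s <= a)%N && (s + n <= a + l)%N).
  case/andP: hp => h1 h2.
  have e : (s + n = a + l)%N.
    apply/eqP; rewrite eqn_leq h2 /=; move: hnp; rewrite h1 /= -ltnNge; lia.
  have hm : Num.min (B s n) (B (s + n) (i - n)) = B s n.
    by apply/min_idPl.
  rewrite hm le_max; apply/orP; right; apply: B_sub => //; lia.
have hb : b <= Num.max b (Num.min (B s n) (B (s + n) (i - n))) by rewrite le_max lexx.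
by apply: le_trans hb; apply: h3 => //; rewrite hp.
Qed.


Lemma cnt2 s n : (2 <= cnt s n)%N = (s == i) && (0 < n)%N.
Proof.
rewrite /cnt; case: (s =P i) => [->|hI] /=.
  have h0i : (i == 0%N) = false by apply/negbTE; rewrite -lt0n ipos.
  by rewrite h0i /=; case: n.
by case: ifP => //; rewrite andbF.
Qed.

Lemma run k : forall st s n, Inv st s n -> 0 <= bopt st -> P2 (bopt st) ->
  P3 s n (bopt st) -> (3 * i <= s + s + n + k)%N ->
  exists fuel b, brun w fuel st = Some b /\ P2 b /\ Light b.
Proof.
elim: k => [|k IH] st s n hI b0 h2 h3 hk.
all: case: (hI) => _ _ hs hn hc0.
all: case: (leqP 2 (cnt s n)) => hc.
- exists 1%N, (bopt st); rewrite /= hc0 hc; split => //; split => //.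
  move: hc; rewrite cnt2 => /andP [/eqP es _]; subst s.
  move=> a l ha hl0 hli hlight; apply: h3 => //; by rewrite leqNgt ha.
- exfalso; move: hc; rewrite ltnNge cnt2 negb_and => /orP [/eqP h|h]; lia.
- exists 1%N, (bopt st); rewrite /= hc0 hc; split => //; split => //.
  move: hc; rewrite cnt2 => /andP [/eqP es _]; subst s.
  move=> a l ha hl0 hli hlight; apply: h3 => //; by rewrite leqNgt ha.
have [hlt|hge] := ltP (B (s + n) (i - n)) (B s n).
  have n0 : (0 < n)%N.
    rewrite lt0n; apply/eqP => en; move: hlt; rewrite en B0 ltNge => /negP; apply.
    exact: B_ge0.
  have [hI' hb] := step_s hI hc hlt.
  have [fuel [b [hr [hb2 hbl]]]] := IH _ _ _ hI'
    (ltac:(rewrite hb le_max b0 //)) (ltac:(rewrite hb; exact: P2_step))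
    (ltac:(rewrite hb; exact: P3_s)) (ltac:(lia)).
  by exists fuel.+1, b; rewrite /= hc0 leqNgt hc.
have [hI' hb] := step_e hI hc hge.
have [fuel [b [hr [hb2 hbl]]]] := IH _ _ _ hI'
  (ltac:(rewrite hb le_max b0 //)) (ltac:(rewrite hb; exact: P2_step))
  (ltac:(rewrite hb; exact: P3_e)) (ltac:(lia)).
by exists fuel.+1, b; rewrite /= hc0 leqNgt hc.
Qed.


Lemma ab_eq a l : (l <= i)%N ->
  arc_balance w i a l = Num.min (B a l) (B (a + l) (i - l)).
Proof.
move=> hl; rewrite /arc_balance.
change (arc_weight w i a l) with (B a l); change (total_weight w i) with W.
by rewrite BWsplit.
Qed.

Lemma main_sec : exists fuel b,
    BalanceInCycle w i fuel = Some b /\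
    (exists a l, [/\ (a < i)%N, (0 < l)%N, (l < i)%N & b = arc_balance w i a l]) /\
    (forall a l, (a < i)%N -> (0 < l)%N -> (l < i)%N -> arc_balance w i a l <= b).
Proof.
have hI0 : Inv (init_state R i) 0 0.
  split => //=; rewrite add0n subn0.
  rewrite -[LHS]map_id; apply/eq_in_map => x; rewrite mem_iota => /andP [_ h].
  by rewrite modn_small.
have h30 : P3 0 0 0 by move=> a l _ _ _ _; rewrite !leq0n.
have [fuel [b [hr [h2 hl]]]] := @run (3 * i)%N _ _ _ hI0 (lexx 0) (or_introl erefl) h30 (ltac:(lia)).
have bound : forall a l, (a < i)%N -> (0 < l)%N -> (l < i)%N -> arc_balance w i a l <= b.
  move=> a l ha hl0 hli; rewrite ab_eq; last exact: ltnW.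
  have [hle|hgt] := leP (B a l) (B (a + l) (i - l)); first exact: hl.
  have e1 : B ((a + l) %% i)%N (i - l) = B (a + l) (i - l).
    by rewrite -(addn0 ((a + l) %% i)%N) B_mod addn0.
  rewrite -e1; apply: hl.
  - exact: ltn_pmod ipos.
  - lia.
  - lia.
  rewrite B_mod e1.
  have -> : (a + l + (i - l) = a + i)%N by lia.
  have -> : (i - (i - l) = l)%N by lia.
  by rewrite B_per; apply: ltW.
exists fuel, b; split => //; split => //.
have bpos : 0 < b.
  apply: lt_le_trans (bound 0%N 1%N ipos erefl hi).
  rewrite ab_eq; last exact: ltnW.
  by rewrite lt_min !B_pos //; lia.
case: h2 => [b0|] //; by rewrite b0 ltxx in bpos.
Qed.

End Proof.

Theorem lemma5 (R : realDomainType) (i : nat) (w : nat -> R) :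
  (2 <= i)%N ->
  (forall j, (j < i)%N -> 0 < w j) ->
  exists fuel b,
    BalanceInCycle w i fuel = Some b /\
    (exists a l, [/\ (a < i)%N, (0 < l)%N, (l < i)%N & b = arc_balance w i a l]) /\
    (forall a l, (a < i)%N -> (0 < l)%N -> (l < i)%N -> arc_balance w i a l <= b).
Proof. move=> hi hw; exact: main_sec hi hw. Qed.
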